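(* Let $S=(\mathcal{E},\Sigma,X,\mathcal{O})$ be an entity. Then $S$ is state determined (i.e. for $p,q\in\Sigma$, if $O(e,p)=O(e,q)$ for all $e\in\mathcal{E}$ then $p=q$) if and only if the state eigen closure operator $cl_{eig}$ on $\Sigma$ satisfies the $T_0$ separation axiom.
   Context: An entity $S=(\mathcal{E},\Sigma,X,\mathcal{O})$ consists of a set $\mathcal{E}$ (experiments), a set $\Sigma$ (states), and for each $e\in\mathcal{E}$, $p\in\Sigma$ a nonempty set $O(e,p)$, with $X=\bigcup_{e,p}O(e,p)$. Let $O(e)=\bigcup_{p\in\Sigma}O(e,p)$. For $e\in\mathcal{E}$ the eigen map $eig_e:\mathcal{P}(O(e))\to\mathcal{P}(\Sigma)$ is $p\in eig_e(A)\iff O(e,p)\subseteq A$, and $\mathcal{F}(e)=\{eig_e(A):A\subseteq O(e)\}$. The state eigen closure system $\mathcal{F}_{eig}$ is the set of all intersections $\bigcap_i A_i$ of families of elements $A_i\in\bigcup_{e\in\mathcal{E}}\mathcal{F}(e)$, and $cl_{eig}(K)=\bigcap\{F\in\mathcal{F}_{eig}:K\subseteq F\}$ for $K\subseteq\Sigma$. A closure operator $cl$ on $W$ satisfies $T_0$ iff $cl(\{w\})=cl(\{v\})$ implies $w=v$. *)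

(* Defs.v *)
(* sets are predicates (Prop-valued), equality of sets is
   extensional equivalence of membership. *)

Record entity := {
  Exp : Type;
  St : Type;
  Out : Type;                          (* ambient type of outcomes *)
  O : Exp -> St -> Out -> Prop;
  O_nonempty : forall e p, exists x, O e p x
}.

Definition outcomes (S : entity) : Out S -> Prop :=
  fun x => exists e p, O S e p x.

Definition Oe (S : entity) (e : Exp S) : Out S -> Prop :=
  fun x => exists p, O S e p x.

Definition eig (S : entity) (e : Exp S) (A : Out S -> Prop) : St S -> Prop :=
  fun p => forall x, O S e p x -> A x.

Definition Fe (S : entity) (e : Exp S) (F : St S -> Prop) : Prop :=
  exists A : Out S -> Prop, (forall x, A x -> Oe S e x) /\
    (forall p, F p <-> eig S e A p).

Definition Feig (S : entity) (F : St S -> Prop) : Prop :=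
  exists (I : Type) (A : I -> St S -> Prop),
    (forall i, exists e, Fe S e (A i)) /\
    (forall p, F p <-> forall i, A i p).

Definition cl_eig (S : entity) (K : St S -> Prop) : St S -> Prop :=
  fun p => forall F, Feig S F -> (forall q, K q -> F q) -> F p.

Definition singleton {T : Type} (w : T) : T -> Prop := fun v => v = w.

Definition set_eq {T : Type} (A B : T -> Prop) : Prop := forall x, A x <-> B x.

Definition T0 {W : Type} (cl : (W -> Prop) -> (W -> Prop)) : Prop :=
  forall w v : W, set_eq (cl (singleton w)) (cl (singleton v)) -> w = v.

Definition state_determined (S : entity) : Prop :=
  forall p q : St S, (forall e, set_eq (O S e p) (O S e q)) -> p = q.

(* Main.v *)
Require Import Defs.

Lemma cl_char (S : entity) (p q : St S) :
  cl_eig S (singleton p) q <-> forall e x, O S e q x -> O S e p x.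
Proof.
  split.
  - intros H e x Hx.
    set (F := eig S e (O S e p)).
    assert (HF : Feig S F).
    { exists unit, (fun _ => F). split.
      - intros _. exists e. exists (O S e p). split.
        + intros y Hy. exists p. exact Hy.
        + intros r. unfold F. tauto.
      - intros r. split; [intros Hr _; exact Hr | intros Hr; exact (Hr tt)]. }
    specialize (H F HF). unfold F, eig in H.
    apply (H (fun r Hr => match Hr with eq_refl => fun y Hy => Hy end)). exact Hx.
  - intros H F [I [A [HA HFA]]] Hp.
    apply HFA. intros i. destruct (HA i) as [e [B [_ HB]]].
    apply HB. intros x Hx. apply H in Hx.
    assert (Hpi : A i p) by (apply HFA; apply Hp; reflexivity).
    apply HB in Hpi. exact (Hpi x Hx).
Qed.

Theorem mainTheorem3 (S : entity) :
  state_determined S <-> T0 (cl_eig S).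
Proof.
  split.
  - intros SD w v Heq. apply SD. intros e x.
    assert (H1 : cl_eig S (singleton v) w)
      by (apply (proj1 (Heq w)); apply (proj2 (cl_char _ _ _)); intros; assumption).
    assert (H2 : cl_eig S (singleton w) v)
      by (apply (proj2 (Heq v)); apply (proj2 (cl_char _ _ _)); intros; assumption).
    pose proof (proj1 (cl_char S v w) H1) as K1. pose proof (proj1 (cl_char S w v) H2) as K2.
    split; [apply K1 | apply K2].
  - intros HT p q HO. apply HT. intros r. split; intros H;
    apply (proj2 (cl_char _ _ _)); pose proof (proj1 (cl_char _ _ _) H) as H'; intros e x Hx;
    apply (HO e x); apply (H' e x Hx) || (apply (HO e x); apply (H' e x Hx)).
Qed.
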